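(* Let $q$ be a prime power and $k\ge3$, $h\ge2$ integers, and $1\le u_0<u_1\le\dots\le u_h$ integers. Let $U_0,U_1,\dots,U_h$ be subspaces of $\mathbf F_q^k$ of dimensions $u_0,u_1,\dots,u_h$ with $U_i\cap U_j=U_0$ for all distinct $i,j\in\{1,\dots,h\}$, and assume $q^k-q^{k-1}>q^{u_0}-1+\sum_{i=1}^h(q^{u_i}-q^{u_0})$. Let $U$ be the set of nonzero vectors of $\mathbf F_q^k$ not in $U_1\cup\dots\cup U_h$, let $\widetilde G$ be a matrix whose columns consist of exactly one representative of each class $\{\lambda\mathbf v:\lambda\in\mathbf F_q^*\}$, $\mathbf v\in U$, and let $\mathbf C$ be the linear code with generator matrix $\widetilde G$. 1) If $u_1=\dots=u_{s_1}<u_{s_1+1}=\dots=u_{s_1+s_2}<\dots<u_{s_1+\dots+s_{t-1}+1}=\dots=u_{s_1+\dots+s_t}$ with $1\le s_i<q$ for $i=1,\dots,t$ and $h=s_1+\dots+s_t$, then the Griesmer defect of $\mathbf C$ is at most $(h-1)\frac{q^{u_0}-1}{q-1}$. 2) If $u_1=\dots=u_h=u$, then the Griesmer defect of $\mathbf C$ is at most $(h-1)\frac{q^{u_0}-1}{q-1}+\sum_{i=1}^{k-u}\lfloor h/q^i\rfloor$.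
   Context: For a linear $[n,k,d]_q$ code, $g_q(k,d)=\sum_{i=0}^{k-1}\lceil d/q^i\rceil$ and the Griesmer defect is $n-g_q(k,d)$. *)

(* Defs.v *)
From HB Require Import structures.
From mathcomp Require Import all_boot all_order all_algebra all_field.
Set Implicit Arguments. Unset Strict Implicit. Unset Printing Implicit Defensive.
Import GRing.Theory.

Local Open Scope ring_scope.

Definition wt (F : fieldType) (n : nat) (c : 'rV[F]_n) : nat :=
  #|[set j : 'I_n | c 0 j != 0]|.

Definition min_dist (F : finFieldType) (k n : nat) (G : 'M[F]_(k, n)) : nat :=
  \big[minn/n]_(x : 'rV[F]_k | x *m G != 0) wt (x *m G).

Definition ceil_div (a b : nat) : nat := ((a + b - 1) %/ b)%N.

Definition griesmer (q k d : nat) : nat := (\sum_(i < k) ceil_div d (q ^ i))%N.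

Definition griesmer_defect (F : finFieldType) (k n : nat) (G : 'M[F]_(k, n)) : nat :=
  (n - griesmer #|F| (\rank G) (min_dist G))%N.

(* Main.v *)
Require Import Defs.
From HB Require Import structures.
From mathcomp Require Import all_boot all_order all_algebra all_field.
From mathcomp Require Import zify.
Set Implicit Arguments. Unset Strict Implicit. Unset Printing Implicit Defensive.
Import GRing.Theory.
Local Open Scope ring_scope.

Lemma cardV (F : finFieldType) k (W : {vspace 'rV[F]_k}) :
  #|[set v | v \in W]| = (#|F| ^ \dim W)%N.
Proof. by rewrite cardsE card_vspace. Qed.

Definition hypf (F : finFieldType) k (x : 'rV[F]_k) : 'Hom('rV[F]_k, 'rV[F]_1) :=
  linfun (mulmxr x^T).

Lemma hypfE (F : finFieldType) k (x : 'rV[F]_k) v : hypf x v = v *m x^T.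
Proof. by rewrite /hypf lfunE. Qed.

Lemma dim_img_le1 (F : finFieldType) k (x : 'rV[F]_k) W : (\dim (hypf x @: W) <= 1)%N.
Proof.
apply: leq_trans (dimvS (subvf _)) _.
by rewrite dimvf /dim /= mul1n.
Qed.

Lemma hyp_cap (F : finFieldType) k (x : 'rV[F]_k) (W : {vspace 'rV[F]_k}) :
  (#|F| ^ (\dim W).-1 <= #|[set v | (v \in W) && (v *m x^T == 0%R)]|)%N.
Proof.
have -> : [set v | (v \in W) && (v *m x^T == 0%R)] = [set v | v \in (W :&: lker (hypf x))%VS].
  by apply/setP => v; rewrite !inE memv_cap memv_ker hypfE.
rewrite cardV leq_exp2l ?finNzRing_gt1 //.
have := limg_ker_dim (hypf x) W; have := dim_img_le1 x W; move=> A B; rewrite -subn1 -B leq_subLR addnC leq_add2r; exact: A.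
Qed.

Lemma hyp_small (F : finFieldType) k (x : 'rV[F]_k) : x != 0 ->
  (#|[set v : 'rV[F]_k | v *m x^T == 0%R]| <= #|F| ^ k.-1)%N.
Proof.
move=> x0.
have -> : [set v : 'rV[F]_k | v *m x^T == 0%R] = [set v | v \in (fullv :&: lker (hypf x))%VS].
  by apply/setP => v; rewrite !inE memv_cap memv_ker hypfE memvf.
rewrite cardV leq_exp2l ?finNzRing_gt1 //.
have := limg_ker_dim (hypf x) fullv.
have : (1 <= \dim (hypf x @: fullv))%N.
  rewrite lt0n dimv_eq0; apply/negP => /eqP H.
  have [j xj] : exists j, x 0 j != 0.
    apply/existsP; apply: contraR x0 => /existsPn H2.
    by apply/eqP/rowP => j; rewrite mxE; have := H2 j; rewrite negbK => /eqP.
  have : hypf x (delta_mx 0 j) \in (0 : {vspace 'rV[F]_1})%VS by rewrite -H memv_img ?memvf.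
  rewrite memv0 hypfE => /eqP/matrixP/(_ 0 0); rewrite !mxE.
  rewrite (bigD1 j) //= big1 ?addr0 ?mxE ?eqxx ?mul1r; first by move/eqP: xj.
  by move=> i /negbTE ij; rewrite !mxE ij /= mul0r.
have dk : \dim (fullv : {vspace 'rV[F]_k}) = k by rewrite dimvf /dim /= mul1n.
rewrite dk => A B.
have [a Ha] : {a : nat | a = \dim (fullv :&: lker (hypf x))} by eexists.
have [b Hb] : {b : nat | b = \dim (limg (hypf x))} by eexists.
rewrite -Ha; rewrite -Ha -Hb in B; rewrite -Hb in A; lia.
Qed.

Lemma cardI (T : finType) (P : pred T) : #|[set v | P v]| = (\sum_v (P v : nat))%N.
Proof. by rewrite -sum1dep_card big_mkcond; apply: eq_bigr => v _; case: (P v). Qed.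

Lemma colx (F : finFieldType) k n (G : 'M[F]_(k, n)) (x : 'rV[F]_k) j :
  ((col j G)^T *m x^T == 0) = ((x *m G) 0 j == 0).
Proof.
have -> : (col j G)^T *m x^T = ((x *m G) 0 j)%:M.
  apply/matrixP => a b; rewrite !ord1 !mxE eqxx mulr1n.
  by apply: eq_bigr => l _; rewrite !mxE mulrC.
apply/eqP/eqP => [/matrixP/(_ 0 0)|->]; last by apply/matrixP => a b; rewrite !mxE mul0rn.
by rewrite !mxE eqxx mulr1n.
Qed.

Lemma count_le (F : finFieldType) k n (G : 'M[F]_(k, n)) (J : {set 'I_n}) (S : {set 'rV[F]_k}) :
  (forall j, (col j G)^T != 0) ->
  (forall j j', j != j' -> forall lam : F, (col j G)^T != lam *: (col j' G)^T) ->
  (forall j (lam : F), j \in J -> lam != 0 -> lam *: (col j G)^T \in S) ->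
  ((#|F| - 1) * #|J| <= #|S|)%N.
Proof.
move=> nz dist inS.
pose f := fun p : 'I_n * F => p.2 *: (col p.1 G)^T.
have <- : #|f @: setX J [set~ 0]| = ((#|F| - 1) * #|J|)%N.
  rewrite card_in_imset; first by rewrite cardsX cardsC1 mulnC subn1.
  move=> [j l] [j' l']; rewrite !inE /= => /andP [_ l0] /andP [_ l'0].
  rewrite /f /= => e.
  have jj : j = j'.
    apply/eqP; apply: (contraNT (fun ne => dist j j' ne (l^-1 * l'))).
    rewrite negbK; apply/eqP; by rewrite -scalerA -e scalerA mulVf ?scale1r.
  subst j'; congr (_, _).
  move/eqP: e; rewrite -subr_eq0 -scalerBl scaler_eq0 (negbTE (nz j)) orbF subr_eq0.
  by move/eqP.
apply: subset_leq_card; apply/subsetP => v /imsetP [[j l] /setXP [/= jJ]].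
by rewrite !inE => l0 ->; apply: inS.
Qed.

Lemma count_ge (F : finFieldType) k n (G : 'M[F]_(k, n)) (J : {set 'I_n}) (S : {set 'rV[F]_k}) :
  (forall v, v \in S -> exists j, exists lam : F,
       [/\ j \in J, lam != 0 & v = lam *: (col j G)^T]) ->
  (#|S| <= (#|F| - 1) * #|J|)%N.
Proof.
move=> H.
pose f := fun p : 'I_n * F => p.2 *: (col p.1 G)^T.
apply: (@leq_trans #|f @: setX J [set~ 0]|).
  apply: subset_leq_card; apply/subsetP => v /H [j [l [jJ l0 ->]]].
  by apply/imsetP; exists (j, l) => //; apply/setXP; rewrite !inE.
by apply: leq_trans (leq_imset_card _ _) _; rewrite cardsX cardsC1 mulnC subn1.
Qed.
Local Close Scope ring_scope.

Lemma ceil_floor d S Q m : 0 < m -> m %| Q -> Q <= d + S ->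
  Q %/ m <= ceil_div d m + S %/ m.
Proof.
move=> m0 /dvdnP [t ->] H; rewrite mulnK // /ceil_div.
have e1 := divn_eq (d + m - 1) m; have l1 := ltn_pmod (d + m - 1) m0.
have e2 := divn_eq S m; have l2 := ltn_pmod S m0.
set c := (d + m - 1) %/ m in e1 *; set r1 := (d + m - 1) %% m in e1 l1.
set f := S %/ m in e2 *; set r2 := S %% m in e2 l2.
rewrite -ltnS -(ltn_pmul2r m0); nia.
Qed.

Lemma A1 q k d S : 0 < q -> q ^ k.-1 <= d + S ->
  \sum_(i < k) q ^ (k.-1 - i) <= griesmer q k d + \sum_(i < k) S %/ q ^ i.
Proof.
move=> q0 H; rewrite /griesmer -big_split /=; apply: leq_sum => i _.
have lik : i <= k.-1 by have := ltn_ord i; lia.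
rewrite -(@mulnK (q ^ (k.-1 - i)) (q ^ i)) ?expn_gt0 ?q0 // -expnD subnK //.
apply: ceil_floor => //; first by rewrite expn_gt0 q0.
by rewrite dvdn_exp2l.
Qed.

Lemma A2 q k h (us : 'I_h -> nat) : 0 < q -> (forall j, 0 < us j) ->
  \sum_(i < k) (\sum_j q ^ (us j).-1) %/ q ^ i =
  \sum_j \sum_(i < k) (if i < us j then q ^ ((us j).-1 - i) else 0)
  + \sum_(i < k) (\sum_(j | us j <= i) q ^ (us j).-1) %/ q ^ i.
Proof.
move=> q0 u0.
rewrite [X in _ = X + _]exchange_big /= -big_split /=.
apply: eq_bigr => i _.
rewrite (bigID (fun j => i < us j)) /=.
have -> : \sum_(j | ~~ (i < us j)) q ^ (us j).-1 = \sum_(j | us j <= i) q ^ (us j).-1 by apply: eq_bigl => j; rewrite -leqNgt.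
have -> : \sum_(j | i < us j) q ^ (us j).-1 = q ^ i * \sum_(j | i < us j) q ^ ((us j).-1 - i).
  rewrite big_distrr /=; apply: eq_bigr => j lij; rewrite -expnD subnKC //.
  by have := u0 j; lia.
rewrite divnDl ?dvdn_mulr // mulKn ?expn_gt0 ?q0 // big_mkcond /=.
done.
Qed.

Lemma A3a q u k : \sum_(i < k) (if i < u then q ^ (u.-1 - i) else 0) <=
   \sum_(i < u) q ^ (u.-1 - i).
Proof.
suff: \sum_(0 <= i < k) (if i < u then q ^ (u.-1 - i) else 0) <=
   \sum_(0 <= i < u) q ^ (u.-1 - i) by rewrite !big_mkord.
have -> : \sum_(0 <= i < u) q ^ (u.-1 - i) = \sum_(0 <= i < u) (if i < u then q ^ (u.-1 - i) else 0).
  by rewrite big_nat_cond [RHS]big_nat_cond; apply: eq_bigr => i /andP [/andP [_ ->]].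
case: (leqP k u) => ku.
  by rewrite (@big_cat_nat _ _ _ k 0 u _ _ (leq0n k) ku) /= leq_addr.
rewrite (@big_cat_nat _ _ _ u 0 k _ _ (leq0n u) (ltnW ku)) /=.
rewrite [X in _ + X <= _](_ : _ = 0) ?addn0 //.
rewrite big_nat_cond big1 // => i /andP [/andP [ui _] _]; by rewrite ltnNge ui.
Qed.

Lemma A3b q u : 0 < q -> (q - 1) * \sum_(i < u) q ^ (u.-1 - i) + 1 = q ^ u.
Proof.
move=> q0; elim: u => [|u IH]; first by rewrite big_ord0 muln0.
rewrite big_ord_recl /= subn0.
have -> : \sum_(i < u) q ^ (u - bump 0 i) = \sum_(i < u) q ^ (u.-1 - i).
  by apply: eq_bigr => i _; congr (_ ^ _); rewrite /bump /=; lia.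
rewrite expnS; move: IH; set T := \sum_(i < u) _; set Q := q ^ u.
case: q q0 T Q => // p _ T Q; rewrite subSS subn0; nia.
Qed.

Lemma A4 q h (us : 'I_h -> nat) : 0 < q -> (forall j, 0 < us j) ->
  (forall j, #|[set j' | us j' == us j]| < q) ->
  forall m, \sum_(j | us j <= m) q ^ (us j).-1 < q ^ m.
Proof.
move=> q0 u0 Hq; elim=> [|m IH].
  by rewrite big1 // => j; have := u0 j; lia.
rewrite (bigID (fun j => us j <= m)) /=.
rewrite (eq_bigl (fun j => us j <= m)); last by move=> j; case: leqP => //; lia.
have Hc : #|[set j | us j == m.+1]| <= q - 1.
  case: (pickP (fun j => us j == m.+1)) => [j0 /eqP e | none].
    by rewrite -e; have := Hq j0; lia.
  have -> : [set j | us j == m.+1] = set0 by apply/setP => j; rewrite !inE none.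
  by rewrite cards0.
have -> : \sum_(j | (us j <= m.+1) && ~~ (us j <= m)) q ^ (us j).-1
       = \sum_(j in [set j | us j == m.+1]) q ^ m.
  apply: eq_big => j; first by rewrite inE -ltnNge andbC -eqn_leq eq_sym.
  by move=> /andP [a b]; have -> : us j = m.+1 by lia.
rewrite sum_nat_const expnS.
have := leq_mul Hc (leqnn (q ^ m)); move: IH; move: (\sum_(i < h | us i <= m) q ^ (us i).-1) (#|[set j | us j == m.+1]|) (q ^ m) => a c Q; clear Hc Hq; case: q q0 => [|p] // _; rewrite subSS subn0; nia.
Qed.

Lemma A5 q h k u : 0 < q -> 0 < u ->
  \sum_(i < k) (\sum_(j < h | u <= i) q ^ u.-1) %/ q ^ i
  <= \sum_(1 <= i < (k - u).+1) h %/ q ^ i.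
Proof.
move=> q0 u0.
have E : forall i, (\sum_(j < h | u <= i) q ^ u.-1) %/ q ^ i
                   = if u <= i then h %/ q ^ (i - u.-1) else 0.
  move=> i; case: ifP => ui.
    rewrite (eq_bigl xpredT) // sum_nat_const card_ord.
    have -> : q ^ i = q ^ (i - u.-1) * q ^ u.-1 by rewrite -expnD subnK //; lia.
    by rewrite divnMr // expn_gt0 q0.
  by rewrite big_pred0 // div0n.
rewrite (eq_bigr _ (fun (i : 'I_k) _ => E i)).
suff: \sum_(0 <= i < k) (if u <= i then h %/ q ^ (i - u.-1) else 0)
  <= \sum_(1 <= i < (k - u).+1) h %/ q ^ i by rewrite big_mkord.
case: (leqP u k) => uk; last first.
  rewrite big_nat_cond big1 // => i /andP [/andP [_ ik] _].
  by have -> : (u <= i) = false by lia.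
rewrite (@big_cat_nat _ _ _ u 0 k _ _ (leq0n u) uk) /=.
rewrite [X in X + _](_ : _ = 0) ?add0n; last first.
  rewrite big_nat_cond big1 // => i /andP [/andP [_ ik] _].
  by have -> : (u <= i) = false by lia.
rewrite -{1}[u]add0n big_addn -{1}[1]add0n big_addn.
rewrite subn1 /=; apply: leq_sum => i _.
rewrite leq_addl; apply: eq_leq; congr (_ %/ _ ^ _); lia.
Qed.

Lemma final q k h n d u0 (us : 'I_h -> nat) Un E :
  1 < q -> 2 <= h -> 0 < u0 -> (forall j, u0 < us j) ->
  Un + (h - 1) * q ^ u0 = \sum_j q ^ (us j) ->
  (q - 1) * n + Un <= q ^ k ->
  q ^ k.-1 <= d + \sum_j q ^ (us j).-1 ->
  \sum_(i < k) (\sum_(j | us j <= i) q ^ (us j).-1) %/ q ^ i <= E ->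
  n - griesmer q k d <= (h - 1) * ((q ^ u0 - 1) %/ (q - 1)) + E.
Proof.
move=> q1 h2 u00 uj HUn Hn Hd HE.
have q0 : 0 < q by lia.
pose th u := \sum_(i < u) q ^ (u.-1 - i).
have thE u : (q - 1) * th u + 1 = q ^ u by apply: A3b.
have -> : (q ^ u0 - 1) %/ (q - 1) = th u0.
  by rewrite -(thE u0) addnK mulKn //; lia.
have H1 := @A1 q k d (\sum_j q ^ (us j).-1) q0 Hd.
rewrite (@A2 q k h us q0) in H1; last by move=> j; have := uj j; lia.
have H3 : \sum_j \sum_(i < k) (if i < us j then q ^ ((us j).-1 - i) else 0) <= \sum_j th (us j).
  by apply: leq_sum => j _; apply: A3a.
have HS : \sum_j q ^ (us j) = (q - 1) * \sum_j th (us j) + h.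
  rewrite big_distrr /= -[h in _ + h]card_ord -sum1_card -big_split /=.
  by apply: eq_bigr => j _; rewrite thE.
have Hk := thE k; have H0 := thE u0.
rewrite HS in HUn.
rewrite (_ : \sum_(i < k) q ^ (k.-1 - i) = th k) // in H1.
move: H1 H3 HUn Hn HE Hk H0.
move: (\sum_(i < k) (\sum_(j | us j <= i) q ^ (us j).-1) %/ q ^ i) => T.
move: (griesmer q k d) (\sum_j \sum_(i < k) _) (\sum_j th (us j)) (th k) (th u0) (q ^ k) (q ^ u0).
move=> g X Y tk t0 Qk Q0.
case: q q1 {q0 thE HS Hd th uj} => [|p] // q1; rewrite subSS subn0.
move=> H1 H3 HUn Hn HE Hk H0.
have : p * (n + Y) <= p * (tk + (h - 1) * t0) by nia.
rewrite leq_pmul2l; last by lia.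
move: ((h - 1) * t0) => w; lia.
Qed.

Lemma bigmin_lb (I : finType) (P : pred I) (f : I -> nat) n0 B S :
  B <= n0 + S -> (forall i, P i -> B <= f i + S) ->
  B <= \big[minn/n0]_(i | P i) f i + S.
Proof.
move=> H0 H; apply: (big_ind (fun m => B <= m + S)) => // a b Ha Hb.
by rewrite /minn; case: ifP.
Qed.

Local Open Scope ring_scope.
Unset Implicit Arguments.

Theorem lemma3p2 (F : finFieldType) (k h : nat)
  (U0 : {vspace 'rV[F]_k}) (Us : 'I_h -> {vspace 'rV[F]_k})
  (n : nat) (G : 'M[F]_(k, n)) :
  (3 <= k)%N -> (2 <= h)%N ->
  (1 <= \dim U0)%N ->
  (forall i : 'I_h, (\dim U0 < \dim (Us i))%N) ->
  (forall i j : 'I_h, (i <= j)%N -> (\dim (Us i) <= \dim (Us j))%N) ->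
  (forall i j : 'I_h, i != j -> (Us i :&: Us j)%VS = U0) ->
  (#|F| ^ k - #|F| ^ k.-1 >
     #|F| ^ \dim U0 - 1 + \sum_(i < h) (#|F| ^ \dim (Us i) - #|F| ^ \dim U0))%N ->
  (* every column of G lies in U = (F^k \ {0}) \ (U_1 u ... u U_h) *)
  (forall j : 'I_n, (col j G)^T != 0 /\ forall i : 'I_h, (col j G)^T \notin Us i) ->
  (* distinct columns represent distinct projective points *)
  (forall j j' : 'I_n, j != j' -> forall lam : F, (col j G)^T != lam *: (col j' G)^T) ->
  (* every point of U is represented by some column *)
  (forall v : 'rV[F]_k, v != 0 -> (forall i : 'I_h, v \notin Us i) ->
     exists j : 'I_n, exists lam : F, lam != 0 /\ v = lam *: (col j G)^T) ->
  ((* part 1: each dimension value occurs fewer than q times *)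
   (forall i : 'I_h,
      (#|[set j : 'I_h | \dim (Us j) == \dim (Us i)]| < #|F|)%N) ->
   (griesmer_defect G <= (h - 1) * ((#|F| ^ \dim U0 - 1) %/ (#|F| - 1)))%N)
  /\
  ((* part 2: all U_i of the same dimension u *)
   forall u : nat, (forall i : 'I_h, \dim (Us i) = u) ->
   (griesmer_defect G <= (h - 1) * ((#|F| ^ \dim U0 - 1) %/ (#|F| - 1))
        + \sum_(1 <= i < (k - u).+1) (h %/ #|F| ^ i))%N).
Proof.
move=> k3 h2 u01 Hlt Hmono Hcap Hhyp Hcol Hdist Hsurj.
set q := #|F| in Hhyp *.
have q1 : (1 < q)%N by apply: finNzRing_gt1.
pose a : 'I_h := Ordinal (ltnW h2).
pose Un := [set v : 'rV[F]_k | [exists i, v \in Us i]].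
have HU0 : forall i v, v \in U0 -> v \in Us i.
  move=> i v vU0.
  have [j ji] : exists j : 'I_h, j != i.
    case: (eqVneq i a) => [->|ia]; last by exists a; rewrite eq_sym.
    by exists (Ordinal h2).
  have e := Hcap i j ltac:(by rewrite eq_sym).
  have : v \in (Us i :&: Us j)%VS by rewrite e.
  by rewrite memv_cap => /andP [].
have HUn : (#|Un| + (h - 1) * q ^ \dim U0 = \sum_i q ^ \dim (Us i))%N.
  rewrite -(cardV U0) (eq_bigr _ (fun i _ => esym (cardV (Us i)))).
  rewrite (eq_bigr _ (fun i _ => cardI (fun v => v \in Us i))) !cardI.
  rewrite exchange_big big_distrr -big_split /=; apply: eq_bigr => v _.
  case: (boolP (v \in U0)) => vU0.
    rewrite (eq_bigr (fun _ => 1%N)); last by move=> i _; rewrite HU0.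
    have -> : [exists i, v \in Us i] by apply/existsP; exists a; exact: HU0.
    rewrite big_const_ord iter_addn_0 /=; lia.
  rewrite muln0 addn0.
  case: (boolP [exists i, v \in Us i]) => [/existsP [i vi]|none].
    rewrite (bigD1 i) //= vi big1 ?addn0 // => j ji.
    have : v \notin Us j.
      apply/negP => vj; move/negP: vU0; apply.
      by rewrite -(Hcap i j ltac:(by rewrite eq_sym)) memv_cap vi vj.
    by move/negbTE ->.
  rewrite big1 // => i _.
  have : v \notin Us i by apply: contra none => vi; apply/existsP; exists i.
  by move/negbTE ->.
have Hn : ((q - 1) * n + #|Un| <= q ^ k)%N.
  have inS : forall j (lam : F), j \in [set: 'I_n] -> lam != 0 -> lam *: (col j G)^T \in ~: Un.
    move=> j lam _ l0; rewrite !inE; apply/existsP => [[i Hi]].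
    have : (col j G)^T \in Us i by rewrite -(scalerK l0 (col j G)^T) memvZ.
    by move: ((Hcol j).2 i) => /negP.
  have := @count_le F k n G setT (~: Un) (fun j => (Hcol j).1) Hdist inS.
  rewrite cardsT card_ord => H.
  have : (#| ~: Un | + #|Un| = q ^ k)%N by rewrite addnC cardsC card_mx mul1n.
  move: H; rewrite -/q; move: (#| ~: Un |) (#|Un|) ((q - 1) * n)%N (q ^ k)%N => A B C D; lia.
have Hh : (#|Un| - 1 < q ^ k - q ^ k.-1)%N.
  have E : (\sum_i (q ^ \dim (Us i) - q ^ \dim U0) + h * q ^ \dim U0 = \sum_i q ^ \dim (Us i))%N.
    rewrite -[h in (h * _)%N]card_ord -sum1_card big_distrl -big_split /=.
    apply: eq_bigr => i _; rewrite mul1n subnK // leq_exp2l //; exact: ltnW.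
  move: Hhyp HUn E; rewrite mulnBl mul1n.
  move: (\sum_i (q ^ \dim (Us i) - q ^ \dim U0))%N (\sum_i q ^ \dim (Us i))%N (h * q ^ \dim U0)%N => X Y Z.
  have : (q ^ \dim U0 <= h * q ^ \dim U0)%N by rewrite leq_pmull //; lia.
  lia.
have Hcov : forall x : 'rV[F]_k, x != 0 ->
   [/\ (#|[set v : 'rV[F]_k | v *m x^T == 0%R]| <= q ^ k.-1)%N,
       (#|[set v | (v \notin Un) && (v *m x^T != 0%R)]| <= (q - 1) * wt (x *m G))%N
     & (q ^ k <= #|[set v : 'rV[F]_k | v *m x^T == 0%R]|
               + #|[set v | (v \notin Un) && (v *m x^T != 0%R)]|
               + #|[set v | (v \in Un) && (v *m x^T != 0%R)]|)%N].
  move=> x x0; split; first exact: hyp_small.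
    rewrite /wt; apply: (count_ge (G := G)) => v; rewrite inE => /andP [vU vx].
    have v0 : v != 0 by apply: contraNneq vx => ->; rewrite mul0mx.
    have vi : forall i, v \notin Us i.
      by move=> i; apply: contra vU => vi; rewrite inE; apply/existsP; exists i.
    have [j [lam [l0 ev]]] := Hsurj v v0 vi.
    exists j, lam; split => //.
    rewrite inE -colx; apply: contra vx => /eqP cx.
    by rewrite ev -scalemxAl cx scaler0.
  have -> : (q ^ k = #|[set v : 'rV[F]_k | true]|)%N.
    by rewrite (_ : [set v : 'rV[F]_k | true] = setT) ?cardsT ?card_mx ?mul1n //; apply/setP => v; rewrite !inE.
  rewrite !cardI -!big_split /=; apply: leq_sum => v _.
  case: (v *m x^T == 0) => /=; first by lia.
  by case: (v \in Un) => /=; lia.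
have k0 : (0 < k)%N by lia.
have conv : forall w,
    (q ^ k <= q ^ k.-1 + (q - 1) * w
       + \sum_i (q ^ \dim (Us i) - q ^ (\dim (Us i)).-1))%N ->
    (q ^ k.-1 <= w + \sum_i q ^ (\dim (Us i)).-1)%N.
  move=> w H.
  have E1 : (\sum_i (q ^ \dim (Us i) - q ^ (\dim (Us i)).-1)
             = (q - 1) * \sum_i q ^ (\dim (Us i)).-1)%N.
    rewrite big_distrr /=; apply: eq_bigr => i _.
    have di : (0 < \dim (Us i))%N by have := Hlt i; lia.
    by rewrite -{1}(prednK di) expnS mulnBl mul1n.
  have E2 : (q ^ k = q * q ^ k.-1)%N by rewrite -expnS prednK.
  rewrite E1 E2 in H.
  move: H; move: (\sum_i q ^ (\dim (Us i)).-1)%N (q ^ k.-1)%N => S Q.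
  case: q q1 {E1 E2 Hhyp Hn Hh HUn Hcov} => [|p] // p1.
  rewrite subSS subn0 mulSn => H.
  rewrite -(leq_pmul2l (_ : 0 < p)%N); last by lia.
  rewrite mulnDr; lia.
have Hd : forall x : 'rV[F]_k, x != 0 ->
    (q ^ k.-1 <= wt (x *m G) + \sum_i q ^ (\dim (Us i)).-1)%N.
  move=> x x0; apply: conv.
  have [H1 H2 H3] := Hcov x x0.
  have H4 : (#|[set v | (v \in Un) && (v *m x^T != 0%R)]|
             <= \sum_i #|[set v | (v \in Us i) && (v *m x^T != 0%R)]|)%N.
    rewrite !cardI (eq_bigr _ (fun i _ => cardI (fun v => (v \in Us i) && (v *m x^T != 0%R)))).
    rewrite exchange_big /=; apply: leq_sum => v _.
    case: (boolP (v \in Un)) => //=; rewrite inE => /existsP [i vi].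
    by rewrite (bigD1 i) //= vi; case: (v *m x^T != 0%R) => //=; lia.
  have H5 : (\sum_i #|[set v | (v \in Us i) && (v *m x^T != 0%R)]|
             <= \sum_i (q ^ \dim (Us i) - q ^ (\dim (Us i)).-1))%N.
    apply: leq_sum => i _.
    have E : (#|[set v | (v \in Us i) && (v *m x^T != 0%R)]|
              + #|[set v | (v \in Us i) && (v *m x^T == 0%R)]|
              = #|[set v | v \in Us i]|)%N.
      rewrite !cardI -big_split; apply: eq_bigr => v _.
      by case: (v \in Us i); case: (v *m x^T == 0%R).
    rewrite cardV in E; have := hyp_cap x (Us i); rewrite -/q in E *.
    move: E; move: (#|[set v | (v \in Us i) && (v *m x^T != 0%R)]|)
       (#|[set v | (v \in Us i) && (v *m x^T == 0%R)]|) => A B; move: (q ^ \dim (Us i))%N (q ^ (\dim (Us i)).-1)%N => Q R; lia.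
  move: H1 H2 H3 H4 H5.
  move: (#|[set v : 'rV[F]_k | v *m x^T == 0%R]|) (#|[set v | (v \notin Un) && (v *m x^T != 0%R)]|)
        (#|[set v | (v \in Un) && (v *m x^T != 0%R)]|) (\sum_i #|[set v | (v \in Us i) && (v *m x^T != 0%R)]|)
        ((q - 1) * wt (x *m G))%N (\sum_i (q ^ \dim (Us i) - q ^ (\dim (Us i)).-1))%N.
  move=> A B C D W T; lia.
have Hrank : \rank G = k.
  apply/eqP; rewrite eqn_leq rank_leq_row /= leqNgt; apply/negP => rk.
  have kz : kermx G != 0 by rewrite kermx_eq0 /row_free neq_ltn rk.
  have [i xi] : exists i, row i (kermx G) != 0.
    apply/existsP; apply: contraR kz => /existsPn H; apply/eqP/matrixP => i j.
    by have := H i; rewrite negbK => /eqP/rowP/(_ j); rewrite !mxE.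
  set x := row i (kermx G) in xi.
  have xG : x *m G = 0 by rewrite /x -row_mul mulmx_ker row0.
  have [H1 H2 H3] := Hcov x xi.
  have w0 : wt (x *m G) = 0%N.
    rewrite /wt xG; apply/eqP; rewrite cards_eq0; apply/eqP/setP => j.
    by rewrite !inE mxE eqxx.
  rewrite w0 muln0 in H2.
  have H4 : (#|[set v | (v \in Un) && (v *m x^T != 0%R)]| + 1 <= #|Un|)%N.
    rewrite [X in (_ + X <= _)%N](_ : 1%N = #|[set v : 'rV[F]_k | v == 0]|); last first.
      by rewrite (_ : [set v : 'rV[F]_k | v == 0] = [set 0]) ?cards1 //; apply/setP => v; rewrite !inE.
    have -> : #|Un| = #|[set v | v \in Un]| by apply: eq_card => v; rewrite inE.
    rewrite !cardI -big_split /=.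
    apply: leq_sum => v _.
    case: (eqVneq v 0) => [->|]; last by move=> _; case: (v \in Un); case: (v *m x^T != 0).
    have -> : (0 : 'rV[F]_k) \in Un by rewrite inE; apply/existsP; exists a; exact: mem0v.
    by rewrite mul0mx eqxx.
  move: H1 H2 H3 H4 Hh.
  move: (#|[set v : 'rV[F]_k | v *m x^T == 0%R]|) (#|[set v | (v \notin Un) && (v *m x^T != 0%R)]|)
        (#|[set v | (v \in Un) && (v *m x^T != 0%R)]|) #|Un| (q ^ k)%N (q ^ k.-1)%N.
  move=> A B C D Q R; lia.
have Hmin : (q ^ k.-1 <= min_dist G + \sum_i q ^ (\dim (Us i)).-1)%N.
  rewrite /min_dist; apply: bigmin_lb.
    pose x1 : 'rV[F]_k := const_mx 1.
    have x10 : x1 != 0.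
      apply/eqP => /matrixP/(_ 0 (Ordinal k0)); rewrite !mxE => /eqP.
      by rewrite oner_eq0.
    apply: leq_trans (Hd x1 x10) _; rewrite leq_add2r /wt.
    by apply: leq_trans (max_card _) _; rewrite card_ord.
  move=> x xG; apply: Hd; apply: contraNneq xG => ->; by rewrite mul0mx.
rewrite /griesmer_defect Hrank.
have u0j : forall j, (\dim U0 < \dim (Us j))%N := Hlt.
split.
  move=> Hp1; rewrite -[X in (_ <= X)%N]addn0.
  apply: (@final q k h n (min_dist G) (\dim U0) (fun j => \dim (Us j)) #|Un| 0) => //.
  rewrite big1 // => i _; apply: divn_small.
  apply: (@A4 q h (fun j => \dim (Us j))) => //; first by lia.
  by move=> j; have := Hlt j; lia.
move=> u Hu.
apply: (@final q k h n (min_dist G) (\dim U0) (fun j => \dim (Us j)) #|Un|) => //.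
have -> : (\sum_(i < k) (\sum_(j | \dim (Us j) <= i) q ^ (\dim (Us j)).-1) %/ q ^ i
   = \sum_(i < k) (\sum_(j < h | u <= i) q ^ u.-1) %/ q ^ i)%N.
  apply: eq_bigr => i _; congr (divn _ _); by apply: eq_big => [j|j _]; rewrite Hu.
apply: A5; first by lia.
by have := Hlt a; rewrite Hu; lia.
Qed.
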